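(* Let $\mathbb{F}$ be a field, $d\geq3$ and $V$ a vector space over $\mathbb{F}$ of dimension $d+1$. Let $E^*_0,\dots,E^*_d$ be a system of mutually orthogonal idempotents in $\mathrm{End}(V)$ and $A\in\mathrm{End}(V)$ with $E^*_iAE^*_j=0$ if $|i-j|>1$ and $E^*_iAE^*_j\neq0$ if $|i-j|=1$. Assume $A$ is multiplicity-free and bipartite with primitive idempotents $E_0,\dots,E_d$. Let $\theta^*_0,\dots,\theta^*_d\in\mathbb{F}$ be mutually distinct and $A^*=\sum_i\theta^*_iE^*_i$. Assume $E_0$ is normalizing and $(E_0,E_1)$ is a tail. Then there exists $\beta\in\mathbb{F}$ such that $\theta^*_{i-1}-\beta\theta^*_i+\theta^*_{i+1}$ is independent of $i$ for $1\le i\le d-1$.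
   Context: A system of mutually orthogonal idempotents: $E^*_iE^*_j=\delta_{ij}E^*_i$, $\operatorname{rank}E^*_i=1$. $A$ multiplicity-free: $d+1$ distinct eigenvalues in $\mathbb{F}$; the primitive idempotent for an eigenvalue is the projection onto its eigenspace along the other eigenspaces. Bipartite: $\operatorname{tr}(E^*_iA)=0$ for all $i$. $\Delta$: graph on $E_0,\dots,E_d$ with $E_i\neq E_j$ adjacent iff $E_iA^*E_j\neq0$. $(E_0,E_1)$ is a tail if $E_0$ is adjacent to no vertex other than $E_1$ and $E_1$ is adjacent to at most one vertex other than $E_0$. The matrix $Y$ representing $A$ w.r.t. a basis $v_0,\dots,v_d$ satisfies $Av_j=\sum_iY_{ij}v_i$. An eigenvalue $\theta$ of $A$ is normalizing if some basis with $v_i\in E^*_iV$ makes every row sum of the matrix representing $A$ equal to $\theta$; a primitive idempotent is normalizing if its eigenvalue is. *)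

(* Defs.v *)
From HB Require Import structures.
From mathcomp Require Import all_boot all_order all_algebra.
Set Implicit Arguments. Unset Strict Implicit. Unset Printing Implicit Defensive.
Import Order.TTheory GRing.Theory Num.Theory.
Local Open Scope ring_scope.

(* End(V) for dim V = n is modelled by 'M[F]_n acting on column vectors
   'cV[F]_n (v |-> M *m v), so matrix product is composition. *)

Definition orth_idem_system (F : fieldType) (n : nat) (Es : 'I_n -> 'M[F]_n) :=
  (forall i j, Es i *m Es j = if i == j then Es i else 0) /\
  (forall i, \rank (Es i) = 1%N).

Definition is_eigval (F : fieldType) (n : nat) (A : 'M[F]_n) (th : F) :=
  exists2 v : 'cV[F]_n, v != 0 & A *m v = th *: v.

Definition mult_free_with (F : fieldType) (n : nat) (A : 'M[F]_n) (th : 'I_n -> F) :=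
  injective th /\ (forall i, is_eigval A (th i)).

Definition prim_idem_of (F : fieldType) (n : nat) (A : 'M[F]_n) (th : 'I_n -> F)
  (i : 'I_n) (E : 'M[F]_n) :=
  (forall v : 'cV[F]_n, A *m v = th i *: v -> E *m v = v) /\
  (forall (j : 'I_n) (v : 'cV[F]_n), j != i -> A *m v = th j *: v -> E *m v = 0).

Definition bipartite (F : fieldType) (n : nat) (Es : 'I_n -> 'M[F]_n) (A : 'M[F]_n) :=
  forall i, \tr (Es i *m A) = 0.

Definition Delta_adj (F : fieldType) (n : nat) (E : 'I_n -> 'M[F]_n) (As : 'M[F]_n)
  (i j : 'I_n) : bool :=
  (i != j) && (E i *m As *m E j != 0).

Definition is_tail (F : fieldType) (n : nat) (E : 'I_n -> 'M[F]_n) (As : 'M[F]_n)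
  (a b : 'I_n) :=
  (forall j, Delta_adj E As a j -> j = b) /\
  (#|[set j | Delta_adj E As b j & j != a]| <= 1)%N.

(* theta is normalizing: some basis v_0..v_d (columns of an invertible B) with
   v_i in E^*_i V such that the matrix Y representing A (A v_j = sum_i Y_ij v_i)
   has all row sums equal to theta *)
Definition normalizing (F : fieldType) (n : nat) (Es : 'I_n -> 'M[F]_n) (A : 'M[F]_n)
  (theta : F) :=
  exists B : 'M[F]_n,
    [/\ B \in unitmx,
        (forall i, Es i *m col i B = col i B) &
        exists Y : 'M[F]_n, A *m B = B *m Y /\ (forall i, \sum_j Y i j = theta)].

(* Main.v *)
Require Import Defs.
From HB Require Import structures.
From mathcomp Require Import all_boot all_order all_algebra.
From mathcomp Require Import ring zify.
From Stdlib Require Import Lia.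
Set Implicit Arguments. Unset Strict Implicit. Unset Printing Implicit Defensive.
Import Order.TTheory GRing.Theory Num.Theory.
Local Open Scope ring_scope.

Lemma alg_step (F : fieldType) (k th eta B C x y z c b : F) :
  k != 0 -> th != 0 -> th + k != 0 ->
  c + b = k -> b != 0 -> z != x ->
  c * x + b * z = th * y ->
  c * x ^+ 2 + b * z ^+ 2 = eta * y ^+ 2 + B * y + C ->
  let rho := - (eta + k) / th in let sig := - B / (th + k) in let tau := - C / k in
  x ^+ 2 + y ^+ 2 + rho * x * y + sig * (x + y) + tau = 0 ->
  x + z = - (rho * y + sig) /\
  z ^+ 2 + y ^+ 2 + rho * z * y + sig * (z + y) + tau = 0.
Proof.
move=> k0 th0 thk0 cb b0 zx e1 e2 rho sig tau Q.
set x' := - (rho * y + sig) - x.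
have e4 : th * y * (x + z) - k * x * z = eta * y ^+ 2 + B * y + C.
  rewrite -e2 -cb; have -> : th * y = c * x + b * z by rewrite e1.
  ring.
have e5 : th * y * (x + x') - k * x * x' - (eta * y ^+ 2 + B * y + C) =
          k * (x ^+ 2 + y ^+ 2 + rho * x * y + sig * (x + y) + tau).
  rewrite /x' /rho /sig /tau; field; by rewrite th0 thk0 k0.
rewrite Q mulr0 in e5; move/eqP: e5; rewrite subr_eq0 => /eqP e5.
have e6 : (th * y - k * x) * (z - x') = 0.
  have -> : (th * y - k * x) * (z - x') =
    (th * y * (x + z) - k * x * z) - (th * y * (x + x') - k * x * x') by ring.
  by rewrite e4 e5 subrr.
have e7 : th * y - k * x = b * (z - x).
  rewrite -e1 -cb; ring.
rewrite e7 -mulrA in e6.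
move/eqP: e6; rewrite mulf_eq0 (negbTE b0) /= mulf_eq0 subr_eq0 (negbTE zx) /= subr_eq0 => /eqP zE.
split; first by rewrite zE /x'; ring.
rewrite zE /x'.
rewrite -[RHS]Q; ring.
Qed.

Lemma alg_core (F : fieldType) (d : nat) (c b s : nat -> F) (k th eta B C : F) :
  (3 <= d)%N ->
  (forall i, (i <= d)%N -> c i + b i = k) ->
  c 0%N = 0 ->
  (forall i, (i < d)%N -> b i != 0) ->
  (forall i, (i <= d)%N -> c i * s i.-1 + b i * s i.+1 = th * s i) ->
  (forall i, (i <= d)%N -> c i * s i.-1 ^+ 2 + b i * s i.+1 ^+ 2 = eta * s i ^+ 2 + B * s i + C) ->
  (forall i j, (i <= d)%N -> (j <= d)%N -> s i = s j -> i = j) ->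
  exists beta delta, forall i, (1 <= i <= d.-1)%N -> s i.-1 + s i.+1 = beta * s i + delta.
Proof.
move=> hd cb c0 bn0 e1 e3 sinj.
have b0k : b 0%N = k by rewrite -(cb 0%N) // c0 add0r.
have k0 : k != 0 by rewrite -b0k; apply: bn0; lia.
have s1E : k * s 1%N = th * s 0%N by rewrite -e1 // c0 mul0r add0r b0k.
have th0 : th != 0.
  apply/negP => /eqP th0.
  have s1 : s 1%N = 0.
    by move: s1E; rewrite th0 mul0r => /eqP; rewrite mulf_eq0 (negbTE k0) => /eqP.
  have s3 : s 3%N = 0.
    have := e1 2%N; rewrite th0 mul0r /= s1 mulr0 add0r => /(_ ltac:(lia)) /eqP.
    by rewrite mulf_eq0 (negbTE (bn0 2%N ltac:(lia))) /= => /eqP.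
  by have := sinj 1%N 3%N ltac:(lia) ltac:(lia); rewrite s1 s3 => /(_ erefl).
have thk0 : th + k != 0.
  apply/negP => /eqP thk.
  have thE : th = - k by apply/eqP; rewrite -subr_eq0 opprK thk.
  have s1 : s 1%N = - s 0%N.
    apply: (mulfI k0); by rewrite s1E thE mulrN mulNr.
  have s2 : s 2%N = s 0%N.
    have := e1 1%N ltac:(lia); rewrite /= s1 thE mulrNN.
    rewrite -(cb 1%N) ?mulrDl; last by lia.
    move=> h; apply: (mulfI (bn0 1%N ltac:(lia))).
    by apply: (addrI (c 1%N * s 0%N)); rewrite h.
  by have := sinj 2%N 0%N ltac:(lia) ltac:(lia) s2.
pose rho := - (eta + k) / th; pose sig := - B / (th + k); pose tau := - C / k.
pose Q x y := x ^+ 2 + y ^+ 2 + rho * x * y + sig * (x + y) + tau.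
have step : forall i, (1 <= i <= d.-1)%N -> Q (s i.-1) (s i) = 0 ->
    s i.-1 + s i.+1 = - (rho * s i + sig) /\ Q (s i.+1) (s i) = 0.
  move=> i /andP[i1 id] Qi.
  apply: (@alg_step F k th eta B C (s i.-1) (s i) (s i.+1) (c i) (b i)) => //.
  - by apply: cb; lia.
  - by apply: bn0; lia.
  - by apply/eqP => /sinj; move=> /(_ ltac:(lia) ltac:(lia)); lia.
  - by apply: e1; lia.
  - by apply: e3; lia.
have Qall : forall i, (i < d)%N -> Q (s i) (s i.+1) = 0.
  elim=> [_ | i IH hi].
    have s1 : s 1%N = th * s 0%N / k by rewrite -s1E [k * _]mulrC mulfK.
    rewrite /Q /rho /sig /tau s1.
    have e30 := e3 0%N (leq0n _); rewrite c0 mul0r add0r b0k /= s1 in e30.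
    have -> : (s 0%N) ^+ 2 + (th * s 0%N / k) ^+ 2 + - (eta + k) / th * s 0%N * (th * s 0%N / k) +
      - B / (th + k) * (s 0%N + th * s 0%N / k) + - C / k =
      (k * (th * s 0%N / k) ^+ 2 - (eta * s 0%N ^+ 2 + B * s 0%N + C)) / k.
      by field; rewrite k0 th0 thk0.
    by rewrite -e30 subrr mul0r.
  have [_ Q2] := step i.+1 ltac:(lia) (IH ltac:(lia)).
  rewrite /Q in Q2 *; rewrite -[RHS]Q2; ring.
exists (- rho), (- sig) => i hi.
have Qi : Q (s i.-1) (s i) = 0.
  have := Qall i.-1 ltac:(lia); by have -> : i.-1.+1 = i by lia.
have [-> _] := step i hi Qi.
ring.
Qed.


Lemma prod_act (F : fieldType) (n : nat) (A : 'M[F]_n.+1) (c : 'I_n.+1 -> F)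
  (P : pred 'I_n.+1) (v : 'cV_n.+1) t :
  A *m v = t *: v ->
  (\prod_(l | P l) (A - (c l)%:M)) *m v = (\prod_(l | P l) (t - c l)) *: v.
Proof.
move=> Av; elim/big_rec2: _ => [|l M s Pl IH]; first by rewrite mul1mx scale1r.
rewrite -mulmxE -mulmxA IH -scalemxAr mulmxBl Av mul_scalar_mx -scalerBl scalerA.
by rewrite mulrC.
Qed.

Definition colmx (F : fieldType) (n : nat) (v : 'I_n -> 'cV[F]_n) : 'M[F]_n :=
  \matrix_(i, j) v j i 0.

Lemma colmx_mul (F : fieldType) (n m : nat) (M : 'M[F]_(m, n)) (v : 'I_n -> 'cV[F]_n) i j :
  (M *m colmx v) i j = (M *m v j) i 0.
Proof. by rewrite !mxE; apply: eq_bigr => k _; rewrite mxE. Qed.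

Lemma colmx_ext (F : fieldType) (n m : nat) (M1 M2 : 'M[F]_(m, n)) (v : 'I_n -> 'cV[F]_n) :
  colmx v \in unitmx -> (forall j, M1 *m v j = M2 *m v j) -> M1 = M2.
Proof.
move=> U h; rewrite -(mulmxK U M1) -(mulmxK U M2); congr (_ *m _).
by apply/matrixP => i j; rewrite !colmx_mul h.
Qed.

Lemma eig_indep (F : fieldType) (n : nat) (A : 'M[F]_n.+1) (th : 'I_n.+1 -> F)
  (v : 'I_n.+1 -> 'cV[F]_n.+1) :
  injective th -> (forall j, v j != 0) -> (forall j, A *m v j = th j *: v j) ->
  colmx v \in unitmx.
Proof.
move=> thi vn0 Av.
rewrite -unitmx_tr -row_free_unit -kermx_eq0; apply/rowV0P => x /sub_kermxP xV.
have Vx : colmx v *m x^T = 0 by rewrite -[colmx v]trmxK -trmx_mul xV trmx0.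
have Vsum : colmx v *m x^T = \sum_k x 0 k *: v k.
  apply/colP => i; rewrite !mxE; rewrite summxE; apply: eq_bigr => k _.
  by rewrite !mxE mulrC.
apply/rowP => j; rewrite mxE.
pose P := \prod_(l | l != j) (A - (th l)%:M).
have := congr1 (mulmx P) Vx; rewrite mulmx0 Vsum mulmx_sumr (bigD1 j) //= big1.
  rewrite addr0 -scalemxAr (prod_act _ _ (Av j)) scalerA => /eqP; rewrite scaler_eq0 (negbTE (vn0 j)) orbF.
  rewrite mulf_eq0 => /orP[/eqP //|]; rewrite prodf_seq_eq0 => /hasP[l _ /andP[lj]].
  by rewrite subr_eq0 => /eqP /thi ljE; rewrite ljE eqxx in lj.
move=> k kj; rewrite -scalemxAr (prod_act _ _ (Av k)) (bigD1 k) //= subrr mul0r !scale0r.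
by rewrite scaler0.
Qed.


Lemma E_facts (F : fieldType) (n : nat) (A : 'M[F]_n.+1) (th : 'I_n.+1 -> F)
  (E : 'I_n.+1 -> 'M[F]_n.+1) :
  mult_free_with A th -> (forall i, prim_idem_of A th i (E i)) ->
  [/\ \sum_i E i = 1, forall i, E i *m A = th i *: E i & forall i, A *m E i = th i *: E i].
Proof.
move=> [thi eig] pE.
have [v hv] : exists v : 'I_n.+1 -> 'cV[F]_n.+1, forall i, v i != 0 /\ A *m v i = th i *: v i.
  apply: (@fin_all_exists _ (fun _ => _) (fun i u => u != 0 /\ A *m u = th i *: u)) => i; have [u u0 Au] := eig i; by exists u; split.
have U : colmx v \in unitmx.
  apply: (eig_indep thi) => j; [exact: (proj1 (hv j)) | exact: (proj2 (hv j))].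
have Ev : forall i j, E i *m v j = if i == j then v j else 0.
  move=> i j; case: eqP => [<-|/eqP ij]; first by apply: ((pE i).1 (v i)); case: (hv i).
  by apply: ((pE i).2 j (v j)); [rewrite eq_sym | case: (hv j)].
split.
- apply: (colmx_ext U) => j; rewrite mulmx_suml (bigD1 j) //= big1 => [|i ij].
    by rewrite Ev eqxx addr0 mul1mx.
  by rewrite Ev (negbTE ij).
- move=> i; apply: (colmx_ext U) => j.
  rewrite -mulmxA (proj2 (hv j)) -scalemxAr -!scalemxAl Ev.
  by case: eqP => [->|_]; rewrite ?scaler0.
- move=> i; apply: (colmx_ext U) => j.
  rewrite -mulmxA Ev -scalemxAl Ev.
  by case: eqP => [->|_]; rewrite ?scaler0 ?mulmx0 // (proj2 (hv j)).
Qed.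


Lemma inordv (d m : nat) : ((@inord d m) : nat) = if (m < d.+1)%N then m else 0%N.
Proof. by rewrite /inord val_insubd. Qed.

Lemma tri_sum (F : fieldType) (d : nat) (hd : (2 <= d)%N) (M : 'M[F]_d.+1)
  (Mz : forall i j : 'I_d.+1, ~~((i.+1 == j) || (j.+1 == i)) -> M i j = 0)
  (f : nat -> F) (i : nat) : (i <= d)%N ->
  \sum_j M (inord i) j * f j =
    M (inord i) (inord i.-1) * f i.-1 + M (inord i) (inord i.+1) * f i.+1.
Proof.
move=> id.
have ab : (inord i.+1 : 'I_d.+1) != inord i.-1.
  rewrite -val_eqE /= !inordv; case: ifP => ?; case: ifP => ?; apply/eqP; lia.
rewrite (bigD1 (inord i.-1)) //= (bigD1 (inord i.+1)) //= big1 ?addr0.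
  rewrite inordv ifT; last lia.
  case: (ltnP i d) => hi; first by rewrite inordv ifT.
  have -> : i = d by lia.
  rewrite (Mz (inord d) (inord d.+1)) ?mul0r // !inordv; repeat case: ifP => ?; lia.
move=> j /andP[ja jb]; rewrite Mz ?mul0r //.
have := ltn_ord j; move: ja jb; rewrite -!val_eqE /= !inordv.
repeat case: ifP => ?; lia.
Qed.


Section YL.
Variables (F : fieldType) (d : nat) (hd : (3 <= d)%N) (Y : 'M[F]_d.+1) (k : F).
Hypothesis Yz : forall i j : 'I_d.+1, ~~((i.+1 == j) || (j.+1 == i)) -> Y i j = 0.
Hypothesis Ynz : forall i j : 'I_d.+1, ((i.+1 == j) || (j.+1 == i)) -> Y i j != 0.
Hypothesis Ysum : forall i, \sum_j Y i j = k.

Definition yy (i j : nat) := Y (inord i) (inord j).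
Definition cc i := yy i i.-1.
Definition bb i := yy i i.+1.

Lemma hd2 : (2 <= d)%N. Proof. lia. Qed.

Lemma YzT : forall i j : 'I_d.+1, ~~((i.+1 == j) || (j.+1 == i)) -> Y^T i j = 0.
Proof. by move=> i j h; rewrite mxE Yz // orbC. Qed.

Lemma right_sum (f : nat -> F) i : (i <= d)%N ->
  \sum_(j < d.+1) Y (inord i) j * f j = cc i * f i.-1 + bb i * f i.+1.
Proof. by move=> id; rewrite (tri_sum hd2 Yz). Qed.

Lemma left_sum (f : nat -> F) j : (j <= d)%N ->
  \sum_(i < d.+1) f i * Y i (inord j) = f j.-1 * yy j.-1 j + f j.+1 * yy j.+1 j.
Proof.
move=> jd; rewrite (eq_bigr (fun i : 'I_d.+1 => Y^T (inord j) i * f i)) => [|i _]; last first.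
  by rewrite mxE mulrC.
by rewrite (tri_sum hd2 YzT) // !mxE /yy !(mulrC (f _)).
Qed.

Lemma cc0 : cc 0 = 0.
Proof. by rewrite /cc /yy Yz // !inordv /=; lia. Qed.

Lemma ccbb i : (i <= d)%N -> cc i + bb i = k.
Proof.
move=> id; rewrite -(Ysum (inord i)); have := right_sum (fun _ => 1) id.
by rewrite !mulr1 => <-; apply: eq_bigr => j _; rewrite mulr1.
Qed.

Lemma bbnz i : (i < d)%N -> bb i != 0.
Proof. by move=> id; rewrite /bb /yy Ynz // !inordv !ifT //; lia. Qed.

Lemma ccnz i : (0 < i <= d)%N -> cc i != 0.
Proof. by move=> id; rewrite /cc /yy Ynz // !inordv !ifT //; lia. Qed.

Lemma bbd : bb d = 0.
Proof. by rewrite /bb /yy Yz // !inordv; repeat case: ifP => ?; lia. Qed.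

Lemma yyd : yy d.+1 d = 0.
Proof. by rewrite /yy Yz // !inordv; repeat case: ifP => ?; lia. Qed.

Lemma right_nat (u : 'cV[F]_d.+1) t : Y *m u = t *: u ->
  forall i, (i <= d)%N ->
  cc i * u (inord i.-1) 0 + bb i * u (inord i.+1) 0 = t * u (inord i) 0.
Proof.
move=> Yu i id; have := congr1 (fun M : 'cV[F]_d.+1 => M (inord i) 0) Yu; rewrite !mxE => <-.
have := right_sum (fun m => u (inord m) 0) id => <-.
by apply: eq_bigr => j _; rewrite inord_val.
Qed.

Lemma left_nat (r : 'rV[F]_d.+1) t : r *m Y = t *: r ->
  forall j, (j <= d)%N ->
  r 0 (inord j.-1) * yy j.-1 j + r 0 (inord j.+1) * yy j.+1 j = t * r 0 (inord j).
Proof.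
move=> rY j jd; have := congr1 (fun M : 'rV[F]_d.+1 => M 0 (inord j)) rY; rewrite !mxE => <-.
have := left_sum (fun m => r 0 (inord m)) jd => <-.
by apply: eq_bigr => i _; rewrite inord_val.
Qed.

Fixpoint ww (i : nat) : F := if i is i'.+1 then ww i' * bb i' / cc i'.+1 else 1.

Lemma wnz i : (i <= d)%N -> ww i != 0.
Proof.
elim: i => [|i IH] id /=; first exact: oner_neq0.
rewrite !mulf_neq0 ?IH ?bbnz ?invr_eq0 ?ccnz //; lia.
Qed.

Lemma wl j : (j <= d)%N -> ww j.-1 * yy j.-1 j = ww j * cc j.
Proof.
case: j => [|j] jd //=.
by rewrite /cc /= -/(bb j) mulfVK // ccnz //; lia.
Qed.

Lemma wr j : (j <= d)%N -> ww j.+1 * yy j.+1 j = ww j * bb j.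
Proof.
move=> jd; case: (ltnP j d) => hj.
  by rewrite /= -[yy j.+1 j]/(cc j.+1) mulfVK // ccnz //; lia.
have -> : j = d by lia.
by rewrite yyd bbd !mulr0.
Qed.

Definition wrow : 'rV[F]_d.+1 := \row_(j < d.+1) ww j.

Lemma wrow_eig : wrow *m Y = k *: wrow.
Proof.
apply/rowP => jo; rewrite !mxE -(inord_val jo).
set j := nat_of_ord jo; have jd : (j <= d)%N by rewrite -ltnS ltn_ord.
rewrite (eq_bigr (fun i : 'I_d.+1 => ww i * Y i (inord j))) => [|i _]; last by rewrite mxE.
rewrite left_sum // wl // wr // -mulrDr ccbb // inordv ifT // mulrC.
by [].
Qed.

Lemma left_uniq (r : 'rV[F]_d.+1) t : r *m Y = t *: r -> r 0 (inord 0) = 0 -> r = 0.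
Proof.
move=> rY r0.
have h : forall j, (j < d)%N -> r 0 (inord j) = 0 /\ r 0 (inord j.+1) = 0.
  elim=> [_|j IH jd].
    split => //; have := left_nat rY (leq0n d); rewrite /= r0 mul0r add0r mulr0.
    move/eqP; rewrite mulf_eq0 => /orP[/eqP //|].
    by rewrite -[yy 1 0]/(cc 1) (negbTE (ccnz _)) //; lia.
  have [IH1 IH2] := IH (ltnW jd); split => //.
  have := left_nat rY (_ : (j.+1 <= d)%N); rewrite /= IH1 IH2 mul0r add0r mulr0.
  move=> /(_ (ltnW jd)) /eqP; rewrite mulf_eq0 => /orP[/eqP //|].
  by rewrite -[yy j.+2 j.+1]/(cc j.+2) (negbTE (ccnz _)) //; lia.
apply/rowP => jo; rewrite mxE -(inord_val jo).
case: (ltnP jo d) => hj; first by case: (h _ hj).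
have -> : nat_of_ord jo = d.-1.+1 by have := ltn_ord jo; lia.
by case: (h d.-1 ltac:(lia)).
Qed.

Lemma left2right (r : 'rV[F]_d.+1) t (g : nat -> F) : r *m Y = t *: r ->
  (forall j, (j <= d)%N -> r 0 (inord j) = ww j * g j) ->
  forall j, (j <= d)%N -> cc j * g j.-1 + bb j * g j.+1 = t * g j.
Proof.
move=> rY rg j jd; have := left_nat rY jd.
have e1 : r 0 (inord j.-1) * yy j.-1 j = ww j * (cc j * g j.-1).
  rewrite rg; last lia.
  by rewrite mulrAC wl // mulrA.
have e2 : r 0 (inord j.+1) * yy j.+1 j = ww j * (bb j * g j.+1).
  case: (ltnP j d) => hj.
    by rewrite rg // mulrAC wr // mulrA.
  have ejd : j = d by lia.
  by rewrite ejd yyd bbd !mul0r !mulr0.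
rewrite e1 e2 -mulrDr rg // mulrCA => /(mulfI (wnz jd)).
by [].
Qed.


Lemma inord0E : (inord 0 : 'I_d.+1) = ord0.
Proof. by apply: val_inj; rewrite /= inordv. Qed.

Lemma inord1_neq0 : (inord 1 : 'I_d.+1) != ord0.
Proof. by rewrite -val_eqE /= inordv ifT //; lia. Qed.

Lemma mainY (th : 'I_d.+1 -> F) (Eh : 'I_d.+1 -> 'M[F]_d.+1) (ths : 'I_d.+1 -> F) :
  k = th ord0 ->
  injective th ->
  \sum_i Eh i = 1%:M ->
  (forall i, Eh i *m Y = th i *: Eh i) ->
  (forall i, Y *m Eh i = th i *: Eh i) ->
  injective ths ->
  (forall j, j != ord0 -> j != inord 1 ->
     Eh ord0 *m diag_mx (\row_i ths i) *m Eh j = 0) ->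
  (exists h : 'I_d.+1, forall j, j != h -> j != ord0 -> j != inord 1 ->
     Eh (inord 1) *m diag_mx (\row_i ths i) *m Eh j = 0) ->
  exists beta c : F, forall i : nat, (1 <= i <= d.-1)%N ->
    ths (inord i.-1) - beta * ths (inord i) + ths (inord i.+1) = c.
Proof.
move=> kE thi Esum EY YE thsi tail1 [h tail2].
set Ds := diag_mx (\row_i ths i).
have leftEh : forall (x : 'rV[F]_d.+1) i, (x *m Eh i) *m Y = th i *: (x *m Eh i).
  by move=> x i; rewrite -mulmxA EY scalemxAr.
have left_idem : forall (r : 'rV[F]_d.+1) j, r *m Y = th j *: r -> r *m Eh j = r.
  move=> r j rY.
  have hi : forall i, i != j -> r *m Eh i = 0.
    move=> i ij; have e1 := leftEh r i.
    have e2 : (r *m Eh i) *m Y = th j *: (r *m Eh i).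
      by rewrite -mulmxA EY -YE mulmxA rY -scalemxAl.
    move: e1; rewrite e2 => /eqP; rewrite -subr_eq0 -scalerBl scaler_eq0 subr_eq0.
    by case/orP => [/eqP /thi ji|/eqP //]; rewrite ji eqxx in ij.
  rewrite -{2}[r]mulmx1 -Esum mulmx_sumr (bigD1 j) //= big1 ?addr0 //.
have i10 := inord1_neq0.
have Xdec : forall (x : 'rV[F]_d.+1) (P : pred 'I_d.+1),
    (forall j, ~~ P j -> j != ord0 -> j != inord 1 -> x *m Eh j = 0) ->
    x = x *m Eh ord0 + x *m Eh (inord 1) +
        \sum_(j | P j && (j != ord0) && (j != inord 1)) x *m Eh j.
  move=> x P hP.
  rewrite -{1}[x]mulmx1 -Esum mulmx_sumr (bigD1 ord0) //= (bigD1 (inord 1)) //=.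
  rewrite addrA; congr (_ + _).
  rewrite big_mkcond [in RHS]big_mkcond /=; apply: eq_bigr => j _.
  case: (boolP (P j)) => Pj //=; case: ifP => // /andP[j0 j1].
  by rewrite hP.
pose w := wrow.
have wE0 : w *m Eh ord0 = w by apply: left_idem; rewrite -kE wrow_eig.
have wentry : forall j, (j <= d)%N -> ww (inord j : 'I_d.+1) = ww j.
  by move=> j jd; rewrite inordv ifT.
have uniq_w : forall (p : 'rV[F]_d.+1), p *m Y = k *: p -> p = p 0 (inord 0) *: w.
  move=> p pY; apply/eqP; rewrite -subr_eq0; apply/eqP; apply: (left_uniq (t := k)).
    by rewrite mulmxBl pY -scalemxAl wrow_eig scalerA mulrC -scalerA scalerBr.
  by rewrite !mxE inordv /= mulr1 subrr.
pose x := w *m Ds.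
have xentry : forall j, (j <= d)%N -> x 0 (inord j) = ww j * ths (inord j).
  by move=> j jd; rewrite /x /Ds mul_mx_diag !mxE wentry //.
have xdec := Xdec x xpred0.
rewrite big_pred0 ?addr0 in xdec; last by move=> j.
have {xdec}xdec : x = x *m Eh ord0 + x *m Eh (inord 1).
  apply: xdec => j _ j0 j1; rewrite /x -[w in w *m Ds]wE0 -!mulmxA (mulmxA (Eh _)).
  by rewrite tail1 // mulmx0.
set p := x *m Eh ord0 in xdec.
set r := x *m Eh (inord 1) in xdec.
set al := p 0 (inord 0).
have pE : p = al *: w by apply: uniq_w; rewrite /p leftEh kE.
pose s := fun j => ths (inord j) - al.
have rentry : forall j, (j <= d)%N -> r 0 (inord j) = ww j * s j.
  move=> j jd; have := congr1 (fun M : 'rV[F]_d.+1 => M 0 (inord j)) xdec.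
  rewrite xentry // pE !mxE wentry // => e; apply: (addrI (al * ww j)); rewrite -e.
  by rewrite /s; ring.
set th1 := th (inord 1).
have rY : r *m Y = th1 *: r by rewrite /r leftEh.
clearbody r.
have eq1 := left2right rY rentry.
have s_inj : forall i j, (i <= d)%N -> (j <= d)%N -> s i = s j -> i = j.
  move=> i j id jd; rewrite /s => /eqP; rewrite (can2_eq (subrK _) (addrK _)) subrK.
  move/eqP/thsi/(congr1 val); rewrite /= !inordv !ifT //; lia.
have r0 : r 0 (inord 0) != 0.
  apply/negP => /eqP r0; have r00 := left_uniq rY r0.
  have : s 0 = s 1.
    have := rentry 0%N (leq0n _); have := rentry 1%N ltac:(lia); rewrite r00 !mxE.
    move=> /esym /eqP; rewrite mulf_eq0 (negbTE (wnz _)); last by lia.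
    move=> /eqP -> /esym /eqP; rewrite mulf_eq0 (negbTE (wnz _)) //= => /eqP ->.
    by [].
  by move/s_inj => /(_ (leq0n _) ltac:(lia)).
pose y := r *m Ds.
have rE1 : r *m Eh (inord 1) = r by apply: left_idem.
have ydec := Xdec y (fun j => j == h).
have {ydec}ydec : y = y *m Eh ord0 + y *m Eh (inord 1) +
    \sum_(j | (j == h) && (j != ord0) && (j != inord 1)) y *m Eh j.
  apply: ydec => j jh j0 j1; rewrite /y -[r in r *m Ds]rE1 -!mulmxA (mulmxA (Eh _)).
  by rewrite tail2 // mulmx0.
set v := \sum_(j | _) _ in ydec.
have vY : v *m Y = th h *: v.
  rewrite /v mulmx_suml scaler_sumr; apply: eq_bigr => j /andP[/andP[/eqP -> _] _].
  by rewrite leftEh.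
set a' := (y *m Eh ord0) 0 (inord 0).
have yE0 : y *m Eh ord0 = a' *: w by apply: uniq_w; rewrite leftEh kE.
set b' := (y *m Eh (inord 1)) 0 (inord 0) / r 0 (inord 0).
have yE1 : y *m Eh (inord 1) = b' *: r.
  apply/eqP; rewrite -subr_eq0; apply/eqP; apply: (left_uniq (t := th1)).
    by rewrite mulmxBl leftEh -scalemxAl rY scalerA mulrC -scalerA scalerBr.
  rewrite /b'; move: (y *m Eh (inord 1)) => Z; by rewrite !mxE mulfVK // subrr.
have yent : forall j, y 0 (inord j) = r 0 (inord j) * ths (inord j).
  by move=> j; rewrite /y /Ds mul_mx_diag !mxE.
clearbody a' b' v y.
pose g := fun j => s j * (s j + al) - a' - b' * s j.
have ventry : forall j, (j <= d)%N -> v 0 (inord j) = ww j * g j.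
  move=> j jd; have := congr1 (fun M : 'rV[F]_d.+1 => M 0 (inord j)) ydec.
  rewrite yE0 yE1 !mxE wentry // yent rentry // => e.
  have -> : v 0 (inord j) = ww j * s j * ths (inord j) - (a' * ww j + b' * (ww j * s j)).
    by rewrite e; ring.
  by rewrite /g /s; ring.
have eq2 := left2right vY ventry.
set eta := th h.
pose e := al - b'. pose f := - a'.
have eq3 : forall i, (i <= d)%N ->
    cc i * s i.-1 ^+ 2 + bb i * s i.+1 ^+ 2 =
    eta * s i ^+ 2 + (eta * e - e * th1) * s i + (eta * f - f * k).
  move=> i id; apply/eqP; rewrite -subr_eq0.
  have -> : cc i * s i.-1 ^+ 2 + bb i * s i.+1 ^+ 2 -
      (eta * s i ^+ 2 + (eta * e - e * th1) * s i + (eta * f - f * k)) =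
      (cc i * g i.-1 + bb i * g i.+1 - eta * g i)
      - e * (cc i * s i.-1 + bb i * s i.+1 - th1 * s i) - f * (cc i + bb i - k).
    by rewrite /g /e /f; ring.
  by rewrite eq2 // eq1 // ccbb // !subrr !mulr0 !subr0.
have [beta [delta hbd]] := alg_core hd ccbb cc0 bbnz eq1 eq3 s_inj.
exists beta, (delta + 2%:R * al - beta * al) => i hi.
have := hbd i hi; rewrite /s => hb.
have -> : ths (inord i.-1) - beta * ths (inord i) + ths (inord i.+1) =
  (ths (inord i.-1) - al + (ths (inord i.+1) - al)) - beta * (ths (inord i) - al)
    + 2%:R * al - beta * al by ring.
by rewrite hb; ring.
Qed.

End YL.


Lemma col_mulmx (F : fieldType) m n p (M : 'M[F]_(m, n)) (N : 'M[F]_(n, p)) j :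
  col j (M *m N) = M *m col j N.
Proof. by rewrite !colE mulmxA. Qed.

Lemma mx_col_ext (F : fieldType) m n (M1 M2 : 'M[F]_(m, n)) :
  (forall j, col j M1 = col j M2) -> M1 = M2.
Proof.
move=> h; apply/matrixP => a b.
by have := congr1 (fun M : 'cV[F]_m => M a 0) (h b); rewrite !mxE.
Qed.

Lemma delta_mull (F : fieldType) n (M : 'M[F]_n) i a k :
  (delta_mx i i *m M) a k = (a == i)%:R * M i k.
Proof.
rewrite mxE (bigD1 i) //= big1 ?addr0 => [|l li]; rewrite !mxE ?eqxx ?andbT //.
by rewrite (negbTE li) andbF mul0r.
Qed.

Lemma delta_mulr (F : fieldType) n (M : 'M[F]_n) j a b :
  (M *m delta_mx j j) a b = M a j * (b == j)%:R.
Proof.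
rewrite mxE (bigD1 j) //= big1 ?addr0 => [|l li]; rewrite !mxE ?eqxx //.
by rewrite (negbTE li) mulr0.
Qed.

Lemma dYd (F : fieldType) n (M : 'M[F]_n) i j :
  delta_mx i i *m M *m delta_mx j j = M i j *: delta_mx i j.
Proof.
apply/matrixP => a b; rewrite delta_mulr delta_mull !mxE.
by case: (a == i); case: (b == j); rewrite /= ?mul0r ?mulr0 ?mul1r ?mulr1.
Qed.

Lemma tr_delta (F : fieldType) n (i : 'I_n) : \tr (delta_mx i i : 'M[F]_n) = 1.
Proof.
rewrite /mxtrace (bigD1 i) //= big1 ?addr0 => [|l li]; rewrite !mxE ?eqxx //.
by rewrite (negbTE li).
Qed.

Theorem corollary9p5 (F : fieldType) (d : nat) (hd : (3 <= d)%N)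
  (Es : 'I_d.+1 -> 'M[F]_d.+1) (A : 'M[F]_d.+1)
  (th : 'I_d.+1 -> F) (E : 'I_d.+1 -> 'M[F]_d.+1) (ths : 'I_d.+1 -> F) :
  orth_idem_system Es ->
  (forall i j : 'I_d.+1, ((i.+1 < j) || (j.+1 < i))%N -> Es i *m A *m Es j = 0) ->
  (forall i j : 'I_d.+1, ((i.+1 == j) || (j.+1 == i))%N -> Es i *m A *m Es j != 0) ->
  mult_free_with A th ->
  (forall i, prim_idem_of A th i (E i)) ->
  bipartite Es A ->
  injective ths ->
  normalizing Es A (th ord0) ->
  is_tail E (\sum_i ths i *: Es i) ord0 (inord 1) ->
  exists beta : F, exists c : F, forall i : nat, (1 <= i <= d.-1)%N ->
    ths (inord i.-1) - beta * ths (inord i) + ths (inord i.+1) = c.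
Proof.
move=> [Eorth _] tri0 trin0 mf pE bip thsi [B [BU EsB [Y [AB Ysum]]]] [tail1 tail2].
have [Esum EA AE] := E_facts mf pE.
have [thi _] := mf.
set As := \sum_i ths i *: Es i in tail1 tail2.
set Bi := invmx B.
have YE : Y = Bi *m A *m B by rewrite -mulmxA AB mulKmx.
have EsBd : forall i, Es i *m B = B *m delta_mx i i.
  move=> i; apply: mx_col_ext => j; rewrite !col_mulmx.
  rewrite [col j (delta_mx _ _)]colE mul_delta_mx_cond.
  case: (eqVneq i j) => [<-|ij]; first by rewrite mulr1n -colE EsB.
  by rewrite mulr0n mulmx0 -(EsB j) mulmxA Eorth (negbTE ij) /= mul0mx.
have BiEs : forall i, Bi *m Es i = delta_mx i i *m Bi.
  move=> i; rewrite -[Bi *m Es i]mulmx1 -(mulmxV BU) mulmxA -(mulmxA Bi) EsBd.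
  by rewrite mulmxA (mulVmx BU) mul1mx.
have conj3 : forall X Z W : 'M[F]_d.+1,
    (Bi *m X *m B) *m (Bi *m Z *m B) *m (Bi *m W *m B) = Bi *m (X *m Z *m W) *m B.
  by move=> X Z W; rewrite !mulmxA !mulmxK.
have key : forall i j, Bi *m (Es i *m A *m Es j) *m B = Y i j *: delta_mx i j.
  move=> i j; rewrite !mulmxA BiEs -!mulmxA EsBd !mulmxA -dYd YE !mulmxA.
  by [].
have key0 : forall i j, Es i *m A *m Es j = 0 -> Y i j = 0.
  move=> i j h; have := key i j; rewrite h mulmx0 mul0mx => /matrixP /(_ i j).
  by rewrite !mxE !eqxx mulr1.
have key1 : forall i j, Y i j = 0 -> Es i *m A *m Es j = 0.
  move=> i j h; have e := key i j; rewrite h in e.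
  have -> : Es i *m A *m Es j = B *m (Bi *m (Es i *m A *m Es j) *m B) *m Bi.
    by rewrite !mulmxA (mulmxV BU) mul1mx (mulmxK BU).
  by rewrite e scale0r mulmx0 mul0mx.
have Yz : forall i j : 'I_d.+1, ~~((i.+1 == j) || (j.+1 == i)) -> Y i j = 0.
  move=> i j nij; case: (eqVneq i j) => [<-|ij].
    have := congr1 mxtrace (key i i); rewrite mxtraceZ tr_delta mulr1 => <-.
    rewrite mxtrace_mulC mulmxA (mulmxV BU) mul1mx mxtrace_mulC mulmxA Eorth eqxx.
    exact: bip.
  apply: key0; apply: tri0.
  move: nij ij; rewrite -val_eqE /=; have := ltn_ord i; have := ltn_ord j; lia.
have Ynz : forall i j : 'I_d.+1, ((i.+1 == j) || (j.+1 == i)) -> Y i j != 0.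
  by move=> i j hij; apply/eqP => /key1 /eqP; rewrite (negbTE (trin0 i j hij)).
pose Eh i := Bi *m E i *m B.
have EhSum : \sum_i Eh i = 1%:M.
  by rewrite /Eh -mulmx_suml -mulmx_sumr Esum mulmx1 (mulVmx BU).
have EhY : forall i, Eh i *m Y = th i *: Eh i.
  move=> i; rewrite /Eh YE !mulmxA (mulmxK BU) -(mulmxA Bi (E i)) EA.
  by rewrite -scalemxAr -scalemxAl.
have YEh : forall i, Y *m Eh i = th i *: Eh i.
  move=> i; rewrite /Eh YE !mulmxA (mulmxK BU) -(mulmxA Bi A) AE.
  by rewrite -scalemxAr -scalemxAl.
have DsE : Bi *m As *m B = diag_mx (\row_i ths i).
  rewrite diag_mx_sum_delta /As mulmx_sumr mulmx_suml; apply: eq_bigr => i _.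
  by rewrite mxE -scalemxAr -scalemxAl BiEs -mulmxA (mulVmx BU) mulmx1.
have tr3 : forall a b, Eh a *m diag_mx (\row_i ths i) *m Eh b = Bi *m (E a *m As *m E b) *m B.
  by move=> a b; rewrite -DsE /Eh conj3.
apply: (@mainY F d hd Y (th ord0) Yz Ynz Ysum th Eh ths erefl thi EhSum EhY YEh thsi).
  move=> j j0 j1; rewrite tr3.
  case: (eqVneq (E ord0 *m As *m E j) 0) => [->|nz]; first by rewrite mulmx0 mul0mx.
  have := tail1 j; rewrite /Delta_adj eq_sym j0 nz => /(_ erefl) ej.
  by rewrite ej eqxx in j1.
set S := [set j | Delta_adj E As (inord 1) j & j != ord0] in tail2.
have [h hS] : exists h, forall j, j != h -> j \notin S.
  have : (#|S| == 0%N) || (#|S| == 1%N) by move: tail2; case: #|S| => [|[|]].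
  case/orP => [/eqP/cards0_eq ->|/cards1P[h ->]]; first by exists ord0 => j _; rewrite inE.
  by exists h => j jh; rewrite inE.
exists h => j jh j0 j1; rewrite tr3.
have := hS j jh; rewrite inE j0 andbT /Delta_adj eq_sym j1 /= negbK => /eqP ->.
by rewrite mulmx0 mul0mx.
Qed.
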